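(* Let $r\in\mathbb{R}$, $b\in\mathbb{R}$, $\mu\in\mathbb{R}^N$, and let $\Sigma\in\mathbb{R}^{N\times N}$ be a symmetric positive definite matrix. Let $E:=\{x\in\mathbb{R}^N\setminus\{0\}: b-\mu^Tx>0\}$ and define $f(x):=\left(\frac{b-\mu^Tx}{\sqrt{x^T\Sigma x}}\right)^r$ on $E$. If $r=0$, then $f$ is locally concave on $E$. If $r\neq0$, then $\mathrm{sign}(-r)\cdot f$ is locally convex on $E$ if and only if for every $x\in E$ $$\mu^T\Sigma^{-1}\mu\le(2-r)\frac{(\mu^Tx)^2}{x^T\Sigma x}-2r\sqrt{\theta}\,\frac{\mu^Tx}{\sqrt{x^T\Sigma x}}-(r+1)\theta,\qquad \theta:=\frac{(b-\mu^Tx)^2}{x^T\Sigma x}.$$ Moreover, the function $x\mapsto\ln\frac{b-\mu^Tx}{\sqrt{x^T\Sigma x}}$ is locally concave on $E$ if and only if for every $x\in E$ $$\mu^T\Sigma^{-1}\mu\le 2\frac{(\mu^Tx)^2}{x^T\Sigma x}-\theta.$$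
   Context: A twice differentiable function is locally convex (resp. locally concave) on a set $A$ if its Hessian is positive semidefinite (resp. negative semidefinite) at every point of $A$. *)

(* Defs.v *)
From HB Require Import structures.
From mathcomp Require Import all_boot all_order all_algebra.
From mathcomp Require Import all_classical all_reals all_analysis.
Set Implicit Arguments. Unset Strict Implicit. Unset Printing Implicit Defensive.
Import Order.TTheory GRing.Theory Num.Theory.
Import numFieldNormedType.Exports.
Local Open Scope classical_set_scope.
Local Open Scope ring_scope.

(* Points of R^N are column vectors 'cV[R]_N; e_i = delta_mx i 0. *)
Definition qform (R : realType) (N : nat) (A : 'M[R]_N) (x : 'cV[R]_N) : R :=
  (x^T *m A *m x) 0 0.

Definition dotv (R : realType) (N : nat) (u x : 'cV[R]_N) : R :=
  (u^T *m x) 0 0.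

Definition hessian (R : realType) (N : nat) (f : 'cV[R]_N -> R)
    (x : 'cV[R]_N) : 'M[R]_N :=
  \matrix_(i < N, j < N) ('D_(delta_mx j 0) ('D_(delta_mx i 0) f) x).

Definition psd (R : realType) (N : nat) (H : 'M[R]_N) : Prop :=
  forall v : 'cV[R]_N, 0 <= qform H v.

Definition nsd (R : realType) (N : nat) (H : 'M[R]_N) : Prop :=
  forall v : 'cV[R]_N, qform H v <= 0.

Definition hess_locally_convex (R : realType) (N : nat) (f : 'cV[R]_N -> R)
    (A : set 'cV[R]_N) : Prop :=
  forall x, A x -> psd (hessian f x).

Definition hess_locally_concave (R : realType) (N : nat) (f : 'cV[R]_N -> R)
    (A : set 'cV[R]_N) : Prop :=
  forall x, A x -> nsd (hessian f x).

(* Main.v *)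
Require Import Defs.
From HB Require Import structures.
From mathcomp Require Import all_boot all_order all_algebra.
From mathcomp Require Import all_classical all_reals all_analysis.
From mathcomp Require Import ring lra.
Import Order.TTheory GRing.Theory Num.Theory.
Import numFieldNormedType.Exports.
Local Open Scope classical_set_scope.
Local Open Scope ring_scope.

Section S.
Variables (R : realType) (N : nat).

Lemma line_is_derive (F : 'cV[R]_N -> R) (y v : 'cV[R]_N) (d : R) :
  is_derive (0:R) 1 (fun h : R => F (y + h *: v)) d -> is_derive y v F d.
Proof.
move=> [H1 H2].
have E : (fun h : R => h^-1 *: ((F \o shift y) (h *: v) - F y)) =
   (fun h : R => h^-1 *: (((fun h0 : R => F (y + h0 *: v)) \o shift 0) (h *: 1)
        - F (y + 0 *: v))).
  apply/funext => h /=; rewrite scale0r !addr0 -[h *: 1]/(h * 1) mulr1 (addrC (h *: v)) //.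
have D1 : derivable F y v by rewrite /derivable E.
have D2 : 'D_v F y = d by rewrite /derive E.
exact: DeriveDef D1 D2.
Qed.

Lemma is_derive_aff (a c : R) : is_derive (0:R) 1 (fun h : R => a + h * c) c.
Proof.
apply: (@is_derive_eq _ _ _ (cst a + (id * cst c))).
rewrite /cst /GRing.scale /=.
ring.
Qed.

Definition bf (S : 'M[R]_N) (y v : 'cV[R]_N) : R := (y^T *m S *m v) 0 0.

Lemma dotvD (mu y v : 'cV[R]_N) (h : R) :
  dotv mu (y + h *: v) = dotv mu y + h * dotv mu v.
Proof. by rewrite /dotv mulmxDr -scalemxAr !mxE. Qed.

Lemma dotv_lin (mu y v : 'cV[R]_N) (a c : R) :
  dotv mu (a *: y + c *: v) = a * dotv mu y + c * dotv mu v.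
Proof. by rewrite /dotv mulmxDr -!scalemxAr !mxE. Qed.

Lemma bf_linr (S : 'M[R]_N) (x y v : 'cV[R]_N) (a c : R) :
  bf S x (a *: y + c *: v) = a * bf S x y + c * bf S x v.
Proof. by rewrite /bf mulmxDr -!scalemxAr !mxE. Qed.

Lemma bf_linl (S : 'M[R]_N) (x y v : 'cV[R]_N) (a c : R) :
  bf S (a *: y + c *: v) x = a * bf S y x + c * bf S v x.
Proof. by rewrite /bf linearD !linearZ /= !mulmxDl -!scalemxAl !mxE. Qed.

Lemma bf_sym (S : 'M[R]_N) (y v : 'cV[R]_N) : S^T = S -> bf S v y = bf S y v.
Proof.
move=> HS; rewrite /bf.
have -> : (v^T *m S *m y) 0 0 = ((v^T *m S *m y)^T) 0 0 by rewrite [in RHS]mxE.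
by rewrite !trmx_mul trmxK HS mulmxA.
Qed.

Lemma qform_bf (S : 'M[R]_N) (y : 'cV[R]_N) : qform S y = bf S y y.
Proof. by []. Qed.

Lemma bfD2 (S : 'M[R]_N) (y w v : 'cV[R]_N) (h : R) :
  bf S (y + h *: w) v = bf S y v + h * bf S w v.
Proof. by rewrite -[y in LHS]scale1r bf_linl mul1r. Qed.

Lemma qformD (S : 'M[R]_N) (y v : 'cV[R]_N) (h : R) : S^T = S ->
  qform S (y + h *: v) = qform S y + h * (2 * bf S y v) + h ^+ 2 * qform S v.
Proof.
move=> HS; rewrite !qform_bf -[y in LHS]scale1r bf_linl !bf_linr (bf_sym S y v HS).
rewrite /bf; ring.
Qed.


Lemma Q0 (q0 b1 c2 : R) : q0 + 0 * b1 + 0 ^+ 2 * c2 = q0.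
Proof. by rewrite expr0n /= !mul0r !addr0. Qed.

Lemma dQ (q0 b1 c2 : R) :
  is_derive (0:R) 1 (fun h : R => q0 + h * b1 + h ^+ 2 * c2) b1.
Proof.
have H1 := @is_deriveM R R (@id R) (cst b1) 0 1 1 0 (is_derive_id _ _) (is_derive_cst _ _ _).
have H2 := @is_deriveX R R (@id R) 2 0 1 1 (is_derive_id _ _).
have H3 := @is_deriveM R R (@id R ^+ 2) (cst c2) 0 1 _ 0 H2 (is_derive_cst _ _ _).
have H4 := @is_deriveD R R R (cst q0) _ 0 1 0 _ (is_derive_cst _ _ _) H1.
have H5 := @is_deriveD R R R _ _ 0 1 _ _ H4 H3.
apply: (is_derive_eq H5).
rewrite /cst /GRing.scale /=; ring.
Qed.

Lemma dS (q0 b1 c2 : R) : 0 < q0 ->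
  is_derive (0:R) 1 (fun h : R => Num.sqrt (q0 + h * b1 + h ^+ 2 * c2))
    (b1 / (2 * Num.sqrt q0)).
Proof.
move=> q0pos.
have Hs : is_derive ((fun h : R => q0 + h * b1 + h ^+ 2 * c2) 0) 1 Num.sqrt
   (2 * Num.sqrt q0)^-1.
  by rewrite /= Q0; exact: is_derive1_sqrt.
have := @is_derive1_comp R Num.sqrt (fun h : R => q0 + h * b1 + h ^+ 2 * c2) 0 _ _ Hs (dQ q0 b1 c2).
move=> H. exact: (is_derive_eq H (mulrC _ _)).
Qed.


Lemma dV (f : R -> R) (d : R) : f 0 != 0 -> is_derive (0:R) 1 f d ->
  is_derive (0:R) 1 (fun h => (f h)^-1) (- d / (f 0) ^+ 2).
Proof.
move=> f0 H; apply: (is_derive_eq (is_deriveV f0 H)).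
by rewrite /GRing.scale /= !mulNr mulrC.
Qed.

Lemma dM (f g : R -> R) (df dg : R) : is_derive (0:R) 1 f df ->
  is_derive (0:R) 1 g dg ->
  is_derive (0:R) 1 (fun h => f h * g h) (df * g 0 + f 0 * dg).
Proof.
move=> Hf Hg; apply: (is_derive_eq (is_deriveM Hf Hg)).
rewrite /GRing.scale /= addrC mulrC; congr (_ + _); exact: mulrC.
Qed.

Lemma dC (f : R -> R) (phi : R -> R) (df dphi : R) : is_derive (0:R) 1 f df ->
  is_derive (f 0) 1 phi dphi ->
  is_derive (0:R) 1 (fun h => phi (f h)) (dphi * df).
Proof. move=> Hf Hp; exact: (@is_derive1_comp R phi f 0 _ _ Hp Hf). Qed.

Lemma dAff (a c : R) : is_derive (0:R) 1 (fun h : R => a + h * c) c.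
Proof.
have H1 := @is_deriveM R R (@id R) (cst c) 0 1 1 0 (is_derive_id _ _) (is_derive_cst _ _ _).
have H4 := @is_deriveD R R R (cst a) _ 0 1 0 _ (is_derive_cst _ _ _) H1.
apply: (is_derive_eq H4).
rewrite /cst /GRing.scale /=; ring.
Qed.


Lemma dU (u0 a : R) : is_derive (0:R) 1 (fun h : R => u0 - h * a) (- a).
Proof.
have -> : (fun h : R => u0 - h * a) = (fun h : R => u0 + h * (- a)).
  by apply/funext => h; rewrite mulrN.
exact: dAff.
Qed.

Lemma lineG (u0 a q0 b1 c2 : R) : 0 < q0 ->
  is_derive (0:R) 1
    (fun h : R => (u0 - h * a) / Num.sqrt (q0 + h * b1 + h ^+ 2 * c2))
    (- a / Num.sqrt q0 - u0 * b1 / (2 * Num.sqrt q0 ^+ 3)).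
Proof.
move=> q0pos.
have s0 : 0 < Num.sqrt q0 by rewrite sqrtr_gt0.
have f0 : (fun h : R => Num.sqrt (q0 + h * b1 + h ^+ 2 * c2)) 0 != 0.
  by rewrite /= Q0 gt_eqF.
have H := dM _ _ _ _ (dU u0 a) (dV _ _ f0 (dS q0 b1 c2 q0pos)).
apply: (is_derive_eq H).
rewrite /= Q0 mul0r subr0.
field.
by rewrite gt_eqF.
Qed.


Lemma dB (f g : R -> R) (df dg : R) : is_derive (0:R) 1 f df ->
  is_derive (0:R) 1 g dg ->
  is_derive (0:R) 1 (fun h => f h - g h) (df - dg).
Proof. move=> Hf Hg; exact: (is_deriveB Hf Hg). Qed.

Lemma dK (c : R) : is_derive (0:R) 1 (fun _ : R => c) 0.
Proof. exact: (is_derive_cst c (0:R) (1:R)). Qed.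

Lemma dTi (q0 b1 c2 : R) : 0 < q0 ->
  is_derive (0:R) 1 (fun h : R => (Num.sqrt (q0 + h * b1 + h ^+ 2 * c2))^-1)
    (- b1 / (2 * Num.sqrt q0 ^+ 3)).
Proof.
move=> q0pos.
have s0 : 0 < Num.sqrt q0 by rewrite sqrtr_gt0.
have f0 : (fun h : R => Num.sqrt (q0 + h * b1 + h ^+ 2 * c2)) 0 != 0.
  by rewrite /= Q0 gt_eqF.
apply: (is_derive_eq (dV _ _ f0 (dS q0 b1 c2 q0pos))).
rewrite /= Q0; field.
by rewrite gt_eqF.
Qed.

Lemma lineK (u0 av aw q0 b1 c2 p0 e : R) : 0 < q0 ->
  is_derive (0:R) 1
    (fun h : R => - av * (Num.sqrt (q0 + h * b1 + h ^+ 2 * c2))^-1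
       - (u0 - h * aw) * (p0 + h * e) *
         ((Num.sqrt (q0 + h * b1 + h ^+ 2 * c2))^-1 *
          (Num.sqrt (q0 + h * b1 + h ^+ 2 * c2))^-1 *
          (Num.sqrt (q0 + h * b1 + h ^+ 2 * c2))^-1))
    (av * b1 / (2 * Num.sqrt q0 ^+ 3) + aw * p0 / Num.sqrt q0 ^+ 3
     - u0 * e / Num.sqrt q0 ^+ 3
     + 3 * u0 * p0 * b1 / (2 * Num.sqrt q0 ^+ 5)).
Proof.
move=> q0pos.
have s0 : 0 < Num.sqrt q0 by rewrite sqrtr_gt0.
have T := dTi q0 b1 c2 q0pos.
have H1 := dM _ _ _ _ (dK (- av)) T.
have H2 := dM _ _ _ _ (dU u0 aw) (dAff p0 e).
have H3 := dM _ _ _ _ (dM _ _ _ _ T T) T.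
have H4 := dM _ _ _ _ H2 H3.
have H := dB _ _ _ _ H1 H4.
apply: (is_derive_eq H).
rewrite /= Q0 !mul0r subr0 addr0.
field.
by rewrite gt_eqF.
Qed.


Lemma nearE (b : R) (mu x : 'cV[R]_N) : x != 0 -> 0 < b - dotv mu x ->
  \forall y \near x, y != 0 /\ 0 < b - dotv mu y.
Proof.
move=> x0 ux.
have c : {for x, continuous (fun y : 'cV[R]_N => b - dotv mu y)}.
  apply: differentiable_continuous.
  have -> : (fun y : 'cV[R]_N => b - dotv mu y) =
      cst b - \sum_(i < N) (fun y : 'cV[R]_N => mu i 0 * y i 0).
    apply/funext => y; rewrite fct_sumE /dotv mxE /=.
    congr (_ - _); apply: eq_bigr => i _; rewrite mxE //.
  apply: differentiableB => //.
  apply: differentiable_sum => i.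
  apply: differentiableM => //.
  exact: differentiable_coord.
have h1 : \forall t \near x, t != 0 := @cvgr_neq0 _ _ _ _ _ (fun t : 'cV[R]_N => t) x cvg_id x0.
have h2 := cvgr_gt _ c 0 ux.
near=> y; split.
  near: y; apply: h1; exact: nbhs_filter.
near: y; apply: h2; exact: nbhs_filter.
Unshelve. all: by end_near.
Qed.


Definition Dg (b : R) (mu : 'cV[R]_N) (S : 'M[R]_N) (y v : 'cV[R]_N) : R :=
  - dotv mu v * (Num.sqrt (qform S y))^-1 - (b - dotv mu y) * bf S y v *
    ((Num.sqrt (qform S y))^-1 * (Num.sqrt (qform S y))^-1 *
     (Num.sqrt (qform S y))^-1).

Lemma first_deriv (b : R) (mu : 'cV[R]_N) (S : 'M[R]_N) (HS : S^T = S)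
  (Hpd : forall x : 'cV[R]_N, x != 0 -> 0 < qform S x)
  (phi phi1 : R -> R) (Hphi : forall t : R, 0 < t -> is_derive t 1 phi (phi1 t))
  (y v : 'cV[R]_N) : y != 0 -> 0 < b - dotv mu y ->
  is_derive y v (fun z => phi ((b - dotv mu z) / Num.sqrt (qform S z)))
    (phi1 ((b - dotv mu y) / Num.sqrt (qform S y)) * Dg b mu S y v).
Proof.
move=> y0 uy; have qy := Hpd y y0.
have s0 : 0 < Num.sqrt (qform S y) by rewrite sqrtr_gt0.
apply: line_is_derive.
have -> : (fun h : R => phi ((b - dotv mu (y + h *: v)) /
             Num.sqrt (qform S (y + h *: v)))) =
    (fun h : R => phi ((b - dotv mu y - h * dotv mu v) /
       Num.sqrt (qform S y + h * (2 * bf S y v) + h ^+ 2 * qform S v))).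
  by apply/funext => h; rewrite dotvD (qformD _ _ _ _ HS) opprD addrA.
have Hp : is_derive ((fun h : R => (b - dotv mu y - h * dotv mu v) /
       Num.sqrt (qform S y + h * (2 * bf S y v) + h ^+ 2 * qform S v)) 0) 1 phi
       (phi1 ((b - dotv mu y) / Num.sqrt (qform S y))).
  rewrite /= Q0 mul0r subr0; apply: Hphi; exact: divr_gt0.
have H := dC _ _ _ _ (lineG _ _ _ _ _ qy) Hp.
apply: (is_derive_eq H).
rewrite /Dg; congr (_ * _); field.
by rewrite gt_eqF.
Qed.


Definition G2 (b : R) (mu : 'cV[R]_N) (S : 'M[R]_N) (x v w : 'cV[R]_N) : R :=
  dotv mu v * (2 * bf S x w) / (2 * Num.sqrt (qform S x) ^+ 3)
  + dotv mu w * bf S x v / Num.sqrt (qform S x) ^+ 3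
  - (b - dotv mu x) * bf S w v / Num.sqrt (qform S x) ^+ 3
  + 3 * (b - dotv mu x) * bf S x v * (2 * bf S x w) /
      (2 * Num.sqrt (qform S x) ^+ 5).

Lemma second_deriv (b : R) (mu : 'cV[R]_N) (S : 'M[R]_N) (HS : S^T = S)
  (Hpd : forall x : 'cV[R]_N, x != 0 -> 0 < qform S x)
  (phi phi1 phi2 : R -> R)
  (Hphi : forall t : R, 0 < t -> is_derive t 1 phi (phi1 t))
  (Hphi1 : forall t : R, 0 < t -> is_derive t 1 phi1 (phi2 t))
  (x v w : 'cV[R]_N) : x != 0 -> 0 < b - dotv mu x ->
  'D_w ('D_v (fun z => phi ((b - dotv mu z) / Num.sqrt (qform S z)))) x =
  phi2 ((b - dotv mu x) / Num.sqrt (qform S x)) * Dg b mu S x w * Dg b mu S x v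
  + phi1 ((b - dotv mu x) / Num.sqrt (qform S x)) * G2 b mu S x v w.
Proof.
move=> x0 ux; have qx := Hpd x x0.
have s0 : 0 < Num.sqrt (qform S x) by rewrite sqrtr_gt0.
have e : \forall y \near x,
    'D_v (fun z => phi ((b - dotv mu z) / Num.sqrt (qform S z))) y =
    (fun y => phi1 ((b - dotv mu y) / Num.sqrt (qform S y)) * Dg b mu S y v) y.
  near=> y.
  have [y0 uy] : y != 0 /\ 0 < b - dotv mu y by near: y; exact: nearE.
  by have [_ ->] := first_deriv _ _ _ HS Hpd _ _ Hphi y v y0 uy.
rewrite (near_eq_derive _ e).
suff H : is_derive x w
    (fun y => phi1 ((b - dotv mu y) / Num.sqrt (qform S y)) * Dg b mu S y v)
    (phi2 ((b - dotv mu x) / Num.sqrt (qform S x)) * Dg b mu S x w * Dg b mu S x v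
     + phi1 ((b - dotv mu x) / Num.sqrt (qform S x)) * G2 b mu S x v w).
  by have [_ ->] := H.
apply: line_is_derive.
have -> : (fun h : R => phi1 ((b - dotv mu (x + h *: w)) /
             Num.sqrt (qform S (x + h *: w))) * Dg b mu S (x + h *: w) v) =
    (fun h : R => phi1 ((b - dotv mu x - h * dotv mu w) /
       Num.sqrt (qform S x + h * (2 * bf S x w) + h ^+ 2 * qform S w)) *
     (- dotv mu v * (Num.sqrt (qform S x + h * (2 * bf S x w) + h ^+ 2 * qform S w))^-1
       - (b - dotv mu x - h * dotv mu w) * (bf S x v + h * bf S w v) *
         ((Num.sqrt (qform S x + h * (2 * bf S x w) + h ^+ 2 * qform S w))^-1 *
          (Num.sqrt (qform S x + h * (2 * bf S x w) + h ^+ 2 * qform S w))^-1 *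
          (Num.sqrt (qform S x + h * (2 * bf S x w) + h ^+ 2 * qform S w))^-1))).
  by apply/funext => h; rewrite /Dg dotvD (qformD _ _ _ _ HS) bfD2 opprD addrA.
have Hp : is_derive ((fun h : R => (b - dotv mu x - h * dotv mu w) /
       Num.sqrt (qform S x + h * (2 * bf S x w) + h ^+ 2 * qform S w)) 0) 1 phi1
       (phi2 ((b - dotv mu x) / Num.sqrt (qform S x))).
  rewrite /= Q0 mul0r subr0; apply: Hphi1; exact: divr_gt0.
have H1 := dC _ _ _ _ (lineG _ _ _ _ _ qx) Hp.
have H2 := lineK (b - dotv mu x) (dotv mu v) (dotv mu w) (qform S x) (2 * bf S x w) (qform S w)
   (bf S x v) (bf S w v) qx.
have H := dM _ _ _ _ H1 H2.
apply: (is_derive_eq H).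
rewrite /= Q0 !mul0r subr0 addr0 /Dg /G2.

field.
by rewrite gt_eqF.
Unshelve. all: by end_near.
Qed.


Lemma qform_add (A B : 'M[R]_N) (v : 'cV[R]_N) :
  qform (A + B) v = qform A v + qform B v.
Proof. by rewrite /qform mulmxDr mulmxDl mxE. Qed.

Lemma qform_scale (k : R) (A : 'M[R]_N) (v : 'cV[R]_N) :
  qform (k *: A) v = k * qform A v.
Proof. by rewrite /qform -scalemxAr -scalemxAl mxE. Qed.

Lemma qform_outer (p q : 'rV[R]_N) (v : 'cV[R]_N) :
  qform (p^T *m q) v = (p *m v) 0 0 * (q *m v) 0 0.
Proof.
rewrite /qform mulmxA -mulmxA -trmx_mul mxE big_ord1.
by rewrite [X in X * _]mxE.
Qed.


Lemma rv_mul_lin (k1 k2 : R) (a c : 'rV[R]_N) (v : 'cV[R]_N) :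
  ((k1 *: a + k2 *: c) *m v) 0 0 = k1 * (a *m v) 0 0 + k2 * (c *m v) 0 0.
Proof. by rewrite mulmxDl -!scalemxAl !mxE. Qed.

Lemma qform_struct (H S : 'M[R]_N) (a c : 'rV[R]_N)
  (p1 p2 k1 k2 al1 al2 al3 al4 : R) (v : 'cV[R]_N) : S^T = S ->
  (forall i j, H i j = p2 * (k1 * a 0 j + k2 * c 0 j) * (k1 * a 0 i + k2 * c 0 i)
     + p1 * (al1 * a 0 i * c 0 j + al2 * a 0 j * c 0 i + al3 * S j i
             + al4 * c 0 i * c 0 j)) ->
  qform H v = p2 * (k1 * (a *m v) 0 0 + k2 * (c *m v) 0 0) ^+ 2
    + p1 * (al1 * (a *m v) 0 0 * (c *m v) 0 0 + al2 * (a *m v) 0 0 * (c *m v) 0 0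
            + al3 * qform S v + al4 * (c *m v) 0 0 ^+ 2).
Proof.
move=> HS HH.
have -> : H = p2 *: ((k1 *: a + k2 *: c)^T *m (k1 *: a + k2 *: c)) +
   p1 *: (al1 *: (a^T *m c) + al2 *: (c^T *m a) + al3 *: S + al4 *: (c^T *m c)).
  apply/matrixP => i j; rewrite HH !mxE !big_ord1 !mxE.
  have -> : S j i = S i j by rewrite -[in LHS]HS mxE.
  ring.
rewrite !(qform_add, qform_scale, qform_outer) !rv_mul_lin.
ring.
Qed.


Lemma rv_delta (p : 'rV[R]_N) (i : 'I_N) : (p *m (delta_mx i 0 : 'cV[R]_N)) 0 0 = p 0 i.
Proof. by rewrite -(colE i p) mxE. Qed.

Lemma dotv_e (mu : 'cV[R]_N) (i : 'I_N) : dotv mu (delta_mx i 0) = mu^T 0 i.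
Proof. exact: rv_delta. Qed.

Lemma bf_e (S : 'M[R]_N) (x : 'cV[R]_N) (i : 'I_N) :
  bf S x (delta_mx i 0) = (x^T *m S) 0 i.
Proof. exact: rv_delta. Qed.

Lemma bf_ee (S : 'M[R]_N) (i j : 'I_N) :
  bf S (delta_mx j 0) (delta_mx i 0) = S j i.
Proof. by rewrite /bf rv_delta trmx_delta -rowE mxE. Qed.

Lemma hess_qform (b : R) (mu : 'cV[R]_N) (S : 'M[R]_N) (HS : S^T = S)
  (Hpd : forall x : 'cV[R]_N, x != 0 -> 0 < qform S x)
  (phi phi1 phi2 : R -> R)
  (Hphi : forall t : R, 0 < t -> is_derive t 1 phi (phi1 t))
  (Hphi1 : forall t : R, 0 < t -> is_derive t 1 phi1 (phi2 t))
  (x v : 'cV[R]_N) : x != 0 -> 0 < b - dotv mu x ->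
  qform (hessian (fun z => phi ((b - dotv mu z) / Num.sqrt (qform S z))) x) v =
  phi2 ((b - dotv mu x) / Num.sqrt (qform S x)) * Dg b mu S x v ^+ 2
  + phi1 ((b - dotv mu x) / Num.sqrt (qform S x)) * G2 b mu S x v v.
Proof.
move=> x0 ux; have qx := Hpd x x0.
have s0 : 0 < Num.sqrt (qform S x) by rewrite sqrtr_gt0.
set sq := Num.sqrt (qform S x).
set u := b - dotv mu x.
rewrite (@qform_struct _ S mu^T (x^T *m S)
   (phi1 (u / sq)) (phi2 (u / sq)) (- sq^-1) (- (u * sq^-1 ^+ 3))
   (sq ^+ 3)^-1 (sq ^+ 3)^-1 (- u / sq ^+ 3) (3 * u / sq ^+ 5) v HS).
  rewrite /Dg /G2 -/sq -/u.
  rewrite -[(mu^T *m v) 0 0]/(dotv mu v) -[(x^T *m S *m v) 0 0]/(bf S x v).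
  rewrite -[bf S v v]/(qform S v); field.
  by rewrite gt_eqF.
move=> i j.
rewrite /hessian mxE (second_deriv _ _ _ HS Hpd _ _ _ Hphi Hphi1 _ _ _ x0 ux).
rewrite /Dg /G2 -/sq -/u !dotv_e bf_ee !bf_e.
field.
by rewrite gt_eqF.
Qed.

Definition Pf (r t al B ga : R) :=
  2 * t * al * B + 3 * t ^+ 2 * B ^+ 2 - t ^+ 2 * ga + (r - 1) * (al + t * B) ^+ 2.

Definition Gram (K q ga m al be l1 l2 l3 : R) :=
  l1 ^+ 2 * K + l2 ^+ 2 * q + l3 ^+ 2 * ga + 2 * l1 * l2 * m + 2 * l1 * l3 * al
  + 2 * l2 * l3 * be.

Lemma Pf_dec (r t a B ze Z : R) :
  Pf r t (a * B + ze) B (B ^+ 2 + Z) =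
  ((r - 1) * a ^+ 2 + 2 * r * a * t + (r + 1) * t ^+ 2) * B ^+ 2
  + 2 * ((r - 1) * a + r * t) * B * ze + (r - 1) * ze ^+ 2 - t ^+ 2 * Z.
Proof. rewrite /Pf; ring. Qed.

Lemma key_id (r a t : R) :
  (r - 1) * ((r - 1) * a ^+ 2 + 2 * r * a * t + (r + 1) * t ^+ 2)
  - ((r - 1) * a + r * t) ^+ 2 = - t ^+ 2.
Proof. ring. Qed.

Lemma alg_bwd (r t s K m q al be ga : R) : 0 < t -> 0 < s -> q = s ^+ 2 ->
  (forall l1 l2 l3, 0 <= Gram K q ga m al be l1 l2 l3) ->
  K <= (2 - r) * (m / s) ^+ 2 - 2 * r * t * (m / s) - (r + 1) * t ^+ 2 ->
  Pf r t al (be / s) ga <= 0.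
Proof.
move=> t0 s0 qs G C.
have s0' : s != 0 by rewrite gt_eqF.
have q0 : 0 < q by rewrite qs exprn_gt0.
have q0' : q != 0 by rewrite gt_eqF.
set a := m / s; set B := be / s.
set W := K - a ^+ 2.
set ze := al - a * B.
set Z := ga - B ^+ 2.
set M11 := (r - 1) * a ^+ 2 + 2 * r * a * t + (r + 1) * t ^+ 2.
set L := (r - 1) * a + r * t.
have HP : Pf r t al B ga = M11 * B ^+ 2 + 2 * L * B * ze + (r - 1) * ze ^+ 2 - t ^+ 2 * Z.
  by rewrite -Pf_dec /ze /Z; congr Pf; ring.
have HW : 0 <= W.
  have := G 1 (- (m / q)) 0; rewrite /Gram /W /a qs.
  have -> : (1 ^+ 2 * K + (- (m / s ^+ 2)) ^+ 2 * s ^+ 2 + 0 ^+ 2 * ga +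
     2 * 1 * - (m / s ^+ 2) * m + 2 * 1 * 0 * al + 2 * - (m / s ^+ 2) * 0 * be)
     = K - (m / s) ^+ 2 by field.
  by [].
have HZ : 0 <= Z.
  have := G 0 (- (be / q)) 1; rewrite /Gram /Z /B qs.
  have -> : (0 ^+ 2 * K + (- (be / s ^+ 2)) ^+ 2 * s ^+ 2 + 1 ^+ 2 * ga +
     2 * 0 * - (be / s ^+ 2) * m + 2 * 0 * 1 * al + 2 * - (be / s ^+ 2) * 1 * be)
     = ga - (be / s) ^+ 2 by field.
  by [].
have HD : M11 + W <= 0.
  have -> : M11 + W = K - ((2 - r) * (m / s) ^+ 2 - 2 * r * t * (m / s) - (r + 1) * t ^+ 2).
    by rewrite /M11 /W /a; ring.
  by rewrite subr_le0.
have HG2 : forall la, 0 <= la ^+ 2 * W + 2 * la * ze + Z.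
  move=> la; have := G la (- la * m / q - be / q) 1.
  rewrite /Gram /W /ze /Z /a /B qs.
  have -> : (la ^+ 2 * K + (- la * m / s ^+ 2 - be / s ^+ 2) ^+ 2 * s ^+ 2 +
     1 ^+ 2 * ga + 2 * la * (- la * m / s ^+ 2 - be / s ^+ 2) * m +
     2 * la * 1 * al + 2 * (- la * m / s ^+ 2 - be / s ^+ 2) * 1 * be) =
     la ^+ 2 * (K - (m / s) ^+ 2) + 2 * la * (al - m / s * (be / s)) +
     (ga - (be / s) ^+ 2) by field.
  by [].
rewrite HP.
have [W0|Wpos] := eqVneq W 0.
  have ze0 : ze = 0.
    apply/eqP; apply/negPn/negP => zn0.
    have := HG2 (- (Z + 1) / (2 * ze)); rewrite W0.
    have -> : (- (Z + 1) / (2 * ze)) ^+ 2 * 0 + 2 * (- (Z + 1) / (2 * ze)) * ze + Z = -1.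
      by field.
    by rewrite ler0N1.
  rewrite ze0; move: HD; rewrite W0 addr0 => HD.
  have : 0 <= t ^+ 2 * Z by apply: mulr_ge0 => //; exact: sqr_ge0.
  have : M11 * B ^+ 2 <= 0 by rewrite mulr_le0_ge0 // sqr_ge0.
  rewrite expr0n /= !mulr0 addr0; lra.
have Wp : 0 < W by rewrite lt_def Wpos HW.
have CS : ze ^+ 2 <= W * Z.
  have := HG2 (- ze / W).
  have -> : (- ze / W) ^+ 2 * W + 2 * (- ze / W) * ze + Z = (W * Z - ze ^+ 2) / W.
    by field; rewrite gt_eqF.
  by move=> h; have := mulr_ge0 h (ltW Wp); rewrite divfK ?gt_eqF // subr_ge0.
have M11n : M11 < 0 by lra.
set R2 := W * M11 * B ^+ 2 + 2 * (L * W) * B * ze + ((r - 1) * W - t ^+ 2) * ze ^+ 2.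
have e2 : (W * M11) * R2 = (W * M11 * B + L * W * ze) ^+ 2
    + (W * t ^+ 2 * (- (M11 + W))) * ze ^+ 2.
  by rewrite /R2 /M11 /L; ring.
have R2le : R2 <= 0.
  have : 0 <= (W * M11) * R2.
    rewrite e2; apply: addr_ge0; first exact: sqr_ge0.
    apply: mulr_ge0; last exact: sqr_ge0.
    apply: mulr_ge0; last by rewrite oppr_ge0.
    by apply: mulr_ge0; [exact: ltW | exact: sqr_ge0].
  by rewrite nmulr_rge0 // pmulr_rlt0.
have e1 : W * (M11 * B ^+ 2 + 2 * L * B * ze + (r - 1) * ze ^+ 2 - t ^+ 2 * Z)
    = R2 - t ^+ 2 * (W * Z - ze ^+ 2).
  by rewrite /R2; ring.
suff : W * (M11 * B ^+ 2 + 2 * L * B * ze + (r - 1) * ze ^+ 2 - t ^+ 2 * Z) <= 0.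
  by rewrite pmulr_rle0.
rewrite e1.
have : 0 <= t ^+ 2 * (W * Z - ze ^+ 2).
  apply: mulr_ge0; first exact: sqr_ge0.
  by rewrite subr_ge0.
lra.
Qed.

Lemma alg_fwd (r t s K m q : R) : 0 < t -> 0 < s -> q = s ^+ 2 ->
  0 <= K - (m / s) ^+ 2 ->
  (forall l1 l2, Pf r t (l1 * K + l2 * m) ((l1 * m + l2 * q) / s)
        (l1 ^+ 2 * K + 2 * l1 * l2 * m + l2 ^+ 2 * q) <= 0) ->
  K <= (2 - r) * (m / s) ^+ 2 - 2 * r * t * (m / s) - (r + 1) * t ^+ 2.
Proof.
move=> t0 s0 qs HW H.
have s0' : s != 0 by rewrite gt_eqF.
set a := m / s.
set W := K - a ^+ 2.
set M11 := (r - 1) * a ^+ 2 + 2 * r * a * t + (r + 1) * t ^+ 2.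
set L := (r - 1) * a + r * t.
have F : forall la B, M11 * B ^+ 2 + 2 * L * B * (la * W) + (r - 1) * (la * W) ^+ 2
     - t ^+ 2 * (la ^+ 2 * W) <= 0.
  move=> la B; rewrite /M11 /L -Pf_dec.
  have := H la (B / s - la * m / q).
  have -> : (la * K + (B / s - la * m / q) * m) = a * B + la * W.
    by rewrite /W /a qs; field.
  have -> : (la * m + (B / s - la * m / q) * q) / s = B by rewrite qs; field.
  have -> : la ^+ 2 * K + 2 * la * (B / s - la * m / q) * m + (B / s - la * m / q) ^+ 2 * q
      = B ^+ 2 + la ^+ 2 * W by rewrite /W /a qs; field.
  by [].
have M11le : M11 <= 0.
  have := F 0 1.
  have -> : M11 * 1 ^+ 2 + 2 * L * 1 * (0 * W) + (r - 1) * (0 * W) ^+ 2 -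
     t ^+ 2 * (0 ^+ 2 * W) = M11 by ring.
  by [].
have -> : (K <= (2 - r) * a ^+ 2 - 2 * r * t * a - (r + 1) * t ^+ 2) = (M11 + W <= 0).
  rewrite -subr_le0; congr (_ <= _); rewrite /M11 /W; ring.
have [W0|Wn0] := eqVneq W 0.
  by rewrite W0 addr0.
have Wp : 0 < W by rewrite lt_def Wn0 HW.
have [M0|Mn0] := eqVneq M11 0.
  have L2 : L ^+ 2 = t ^+ 2.
    have := key_id r a t; rewrite -/M11 -/L M0 mulr0 sub0r => /eqP.
    by rewrite eqr_opp => /eqP.
  have Ln0 : L != 0.
    apply/eqP => L0; move: L2; rewrite L0 expr0n /= => /esym/eqP.
    by rewrite sqrf_eq0 gt_eqF.
  set m22 := (r - 1) * W ^+ 2 - t ^+ 2 * W.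
  have := F 1 ((1 - m22) / (2 * L * W)).
  rewrite M0.
  have -> : 0 * ((1 - m22) / (2 * L * W)) ^+ 2 + 2 * L * ((1 - m22) / (2 * L * W)) * (1 * W) +
      (r - 1) * (1 * W) ^+ 2 - t ^+ 2 * (1 ^+ 2 * W) = 1.
    rewrite /m22; field.
    by rewrite Ln0 gt_eqF.
  by rewrite ler10.
have M11n : M11 < 0 by rewrite lt_neqAle Mn0 M11le.
have := F 1 (- L * W / M11).
have -> : M11 * (- L * W / M11) ^+ 2 + 2 * L * (- L * W / M11) * (1 * W) +
    (r - 1) * (1 * W) ^+ 2 - t ^+ 2 * (1 ^+ 2 * W) =
    (W * t ^+ 2) * (M11 + W) / (- M11).
  rewrite /M11 /L; field.
  by rewrite -/M11 Mn0.
have Wt : 0 < W * t ^+ 2 by apply: mulr_gt0 => //; exact: exprn_gt0.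
rewrite pmulr_lle0 ?invr_gt0 ?oppr_gt0 //.
by rewrite pmulr_rle0.
Qed.


End S.

Arguments bf {R N}. Arguments Pf {R}. Arguments Gram {R}. Arguments Dg {R N}. Arguments G2 {R N}.
Arguments bf_sym {R N}. Arguments qform_bf {R N}. Arguments bf_linl {R N}. Arguments bf_linr {R N}.
Arguments dotv_lin {R N}. Arguments hess_qform {R N}. Arguments alg_fwd {R}. Arguments alg_bwd {R}.

Section P.
Variables (R : realType) (N : nat).

Lemma bf_addl (S : 'M[R]_N) (y z w : 'cV[R]_N) : bf S (y + z) w = bf S y w + bf S z w.
Proof. by rewrite /bf linearD /= !mulmxDl mxE. Qed.
Lemma bf_addr (S : 'M[R]_N) (y z w : 'cV[R]_N) : bf S w (y + z) = bf S w y + bf S w z.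
Proof. by rewrite /bf mulmxDr mxE. Qed.
Lemma bf_scalel (S : 'M[R]_N) (c : R) (y w : 'cV[R]_N) : bf S (c *: y) w = c * bf S y w.
Proof. by rewrite /bf linearZ /= -!scalemxAl mxE. Qed.
Lemma bf_scaler (S : 'M[R]_N) (c : R) (y w : 'cV[R]_N) : bf S w (c *: y) = c * bf S w y.
Proof. by rewrite /bf -scalemxAr mxE. Qed.

Lemma qform_lin3 (S : 'M[R]_N) (HS : S^T = S) (y1 y2 y3 : 'cV[R]_N) (l1 l2 l3 : R) :
  qform S (l1 *: y1 + l2 *: y2 + l3 *: y3) =
  l1 ^+ 2 * bf S y1 y1 + l2 ^+ 2 * bf S y2 y2 + l3 ^+ 2 * bf S y3 y3
  + 2 * l1 * l2 * bf S y1 y2 + 2 * l1 * l3 * bf S y1 y3 + 2 * l2 * l3 * bf S y2 y3.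
Proof.
rewrite qform_bf !(bf_addl, bf_addr, bf_scalel, bf_scaler).
rewrite (bf_sym S y1 y2 HS) (bf_sym S y1 y3 HS) (bf_sym S y2 y3 HS).
ring.
Qed.

Lemma qform_ge0 (S : 'M[R]_N) (Hpd : forall x : 'cV[R]_N, x != 0 -> 0 < qform S x)
  (z : 'cV[R]_N) : 0 <= qform S z.
Proof.
have [->|zn0] := eqVneq z 0; last exact: ltW (Hpd z zn0).
by rewrite /qform mulmx0 mxE.
Qed.

Lemma pd_unit (S : 'M[R]_N) (Hpd : forall x : 'cV[R]_N, x != 0 -> 0 < qform S x) :
  S \in unitmx.
Proof.
rewrite unitmxE unitfE; apply/negP => /det0P [w wn0 wS].
have wT : w^T != 0 by apply: contra wn0 => /eqP/(congr1 trmx); rewrite trmxK trmx0 => ->.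
have := Hpd _ wT; rewrite /qform trmxK wS mul0mx mxE.
by rewrite ltxx.
Qed.

Lemma nu_bf (mu : 'cV[R]_N) (S : 'M[R]_N) (HS : S^T = S) (Su : S \in unitmx)
  (v : 'cV[R]_N) : bf S (invmx S *m mu) v = dotv mu v.
Proof.
rewrite /bf /dotv trmx_mul trmx_inv HS -!mulmxA (mulmxA (invmx S)) mulVmx //.
by rewrite mul1mx.
Qed.

Lemma nu_K (mu : 'cV[R]_N) (S : 'M[R]_N) (HS : S^T = S) (Su : S \in unitmx) :
  bf S (invmx S *m mu) (invmx S *m mu) = qform (invmx S) mu.
Proof. by rewrite nu_bf // /dotv /qform mulmxA. Qed.


Lemma qform_lin2 (S : 'M[R]_N) (HS : S^T = S) (y1 y2 : 'cV[R]_N) (l1 l2 : R) :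
  qform S (l1 *: y1 + l2 *: y2) =
  l1 ^+ 2 * bf S y1 y1 + 2 * l1 * l2 * bf S y1 y2 + l2 ^+ 2 * bf S y2 y2.
Proof.
rewrite qform_bf !(bf_addl, bf_addr, bf_scalel, bf_scaler).
rewrite (bf_sym S y1 y2 HS).
ring.
Qed.

Lemma pointwise (b : R) (mu : 'cV[R]_N) (S : 'M[R]_N) (HS : S^T = S)
  (Hpd : forall x : 'cV[R]_N, x != 0 -> 0 < qform S x) (r : R) (x : 'cV[R]_N) :
  x != 0 -> 0 < b - dotv mu x ->
  (forall v, Pf r ((b - dotv mu x) / Num.sqrt (qform S x)) (dotv mu v)
        (bf S x v / Num.sqrt (qform S x)) (qform S v) <= 0) <->
  qform (invmx S) mu <= (2 - r) * (dotv mu x / Num.sqrt (qform S x)) ^+ 2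
     - 2 * r * ((b - dotv mu x) / Num.sqrt (qform S x)) * (dotv mu x / Num.sqrt (qform S x))
     - (r + 1) * ((b - dotv mu x) / Num.sqrt (qform S x)) ^+ 2.
Proof.
move=> x0 ux; have qx := Hpd x x0.
have s0 : 0 < Num.sqrt (qform S x) by rewrite sqrtr_gt0.
have qs : qform S x = Num.sqrt (qform S x) ^+ 2 by rewrite sqr_sqrtr // ltW.
set s := Num.sqrt (qform S x) in s0 qs *.
set t := (b - dotv mu x) / s.
have t0 : 0 < t by exact: divr_gt0.
have Su := pd_unit S Hpd.
set nu := invmx S *m mu.
have bnu : forall v, bf S nu v = dotv mu v by move=> v; exact: nu_bf.
have bK : bf S nu nu = qform (invmx S) mu by exact: nu_K.
set K := qform (invmx S) mu in bK *.
set m := dotv mu x.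
set q := qform S x in qx qs *.
have bxnu : bf S x nu = m by rewrite (bf_sym S nu x HS) bnu.
have Gr : forall v l1 l2 l3, 0 <= Gram K q (qform S v) m (dotv mu v) (bf S x v) l1 l2 l3.
  move=> v l1 l2 l3.
  have := qform_ge0 S Hpd (l1 *: nu + l2 *: x + l3 *: v).
  by rewrite (qform_lin3 S HS) bK !bnu.
split.
  move=> H.
  apply: (alg_fwd r t s K m q t0 s0 qs).
    have := Gr x 1 (- (m / q)) 0.
    rewrite /Gram qs.
    have -> : 1 ^+ 2 * K + (- (m / s ^+ 2)) ^+ 2 * s ^+ 2 + 0 ^+ 2 * qform S x +
       2 * 1 * - (m / s ^+ 2) * m + 2 * 1 * 0 * dotv mu x +
       2 * - (m / s ^+ 2) * 0 * bf S x x = K - (m / s) ^+ 2.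
      by field; rewrite gt_eqF.
    by [].
  move=> l1 l2.
  have := H (l1 *: nu + l2 *: x).
  rewrite dotv_lin bf_linr (qform_lin2 S HS) -bK bnu bxnu.
  rewrite -[bf S x x]/q -[dotv mu x]/m.
  have -> : bf S nu x = m by rewrite bnu.
  by [].
move=> C v.
apply: (alg_bwd r t s K m q (dotv mu v) (bf S x v) (qform S v) t0 s0 qs _ C).
exact: Gr.
Qed.

Lemma Hpow (r : R) (t : R) : 0 < t ->
  is_derive t 1 (fun t : R => Num.sg (- r) * t `^ r) (Num.sg (- r) * r * t `^ (r - 1)).
Proof.
move=> t0.
have H := @is_deriveZ R R R (fun y : R => y `^ r) (Num.sg (- r)) t 1 _ (@is_derive1_powR R r t t0).
apply: (is_derive_eq H).
by rewrite /GRing.scale /= mulrA.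
Qed.

Lemma Hpow1 (r : R) (t : R) : 0 < t ->
  is_derive t 1 (fun t : R => Num.sg (- r) * r * t `^ (r - 1))
     (Num.sg (- r) * r * ((r - 1) * t `^ (r - 1 - 1))).
Proof.
move=> t0.
have H := @is_deriveZ R R R (fun y : R => y `^ (r - 1)) (Num.sg (- r) * r) t 1 _ (@is_derive1_powR R (r - 1) t t0).
exact: (is_derive_eq H).
Qed.

Lemma Hln1 (t : R) : 0 < t -> is_derive t 1 (fun t : R => t^-1) (- (t ^+ 2)^-1).
Proof.
move=> t0.
have t0' : (@id R) t != 0 by rewrite gt_eqF.
have H := @is_deriveV R (@id R) t 1 1 t0' (is_derive_id t 1).
apply: (is_derive_eq H).
by rewrite /GRing.scale /= mulr1.
Qed.


Lemma pow_key (b : R) (mu : 'cV[R]_N) (S : 'M[R]_N) (HS : S^T = S)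
  (Hpd : forall x : 'cV[R]_N, x != 0 -> 0 < qform S x) (r : R) (rn0 : r != 0)
  (x : 'cV[R]_N) : x != 0 -> 0 < b - dotv mu x ->
  psd (hessian (fun z => Num.sg (- r) *
         ((b - dotv mu z) / Num.sqrt (qform S z)) `^ r) x) <->
  (forall v, Pf r ((b - dotv mu x) / Num.sqrt (qform S x)) (dotv mu v)
        (bf S x v / Num.sqrt (qform S x)) (qform S v) <= 0).
Proof.
move=> x0 ux; have qx := Hpd x x0.
have s0 : 0 < Num.sqrt (qform S x) by rewrite sqrtr_gt0.
have qs : qform S x = Num.sqrt (qform S x) ^+ 2 by rewrite sqr_sqrtr // ltW.
have t0 : 0 < (b - dotv mu x) / Num.sqrt (qform S x) by exact: divr_gt0.
have e : forall v, qform (hessian (fun z => Num.sg (- r) *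
         ((b - dotv mu z) / Num.sqrt (qform S z)) `^ r) x) v =
    (Num.sg (- r) * r * ((b - dotv mu x) / Num.sqrt (qform S x)) `^ (r - 1 - 1)
      / Num.sqrt (qform S x) ^+ 2) *
    Pf r ((b - dotv mu x) / Num.sqrt (qform S x)) (dotv mu v)
        (bf S x v / Num.sqrt (qform S x)) (qform S v).
  move=> v.
  rewrite (hess_qform b mu S HS Hpd _ _ _ (Hpow r) (Hpow1 r) x v x0 ux).
  have -> : ((b - dotv mu x) / Num.sqrt (qform S x)) `^ (r - 1) =
     ((b - dotv mu x) / Num.sqrt (qform S x)) `^ (r - 1 - 1) *
     ((b - dotv mu x) / Num.sqrt (qform S x)).
    set g := (b - dotv mu x) / Num.sqrt (qform S x).
    transitivity (g `^ ((r - 1 - 1) + 1)); first by congr (_ `^ _); ring.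
    rewrite powRD; last by apply/implyP => _; rewrite gt_eqF.
    by rewrite powRr1 // ltW.
  rewrite /Dg /G2 /Pf -[bf S v v]/(qform S v).
  set P := _ `^ (r - 1 - 1).
  set s := Num.sqrt (qform S x) in s0 qs *.
  field.
  by rewrite gt_eqF.
have cneg : Num.sg (- r) * r * ((b - dotv mu x) / Num.sqrt (qform S x)) `^ (r - 1 - 1)
      / Num.sqrt (qform S x) ^+ 2 < 0.
  rewrite sgrN mulNr -normrEsg mulNr mulNr oppr_lt0.
  apply: divr_gt0; last exact: exprn_gt0.
  apply: mulr_gt0; first by rewrite normr_gt0.
  exact: powR_gt0.
split => H v.
  by have := H v; rewrite /qform -/(qform _ v) e nmulr_rge0.
by rewrite /qform -/(qform _ v) e nmulr_rge0 //; exact: H.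
Qed.

Lemma ln_key (b : R) (mu : 'cV[R]_N) (S : 'M[R]_N) (HS : S^T = S)
  (Hpd : forall x : 'cV[R]_N, x != 0 -> 0 < qform S x)
  (x : 'cV[R]_N) : x != 0 -> 0 < b - dotv mu x ->
  nsd (hessian (fun z => ln ((b - dotv mu z) / Num.sqrt (qform S z))) x) <->
  (forall v, Pf 0 ((b - dotv mu x) / Num.sqrt (qform S x)) (dotv mu v)
        (bf S x v / Num.sqrt (qform S x)) (qform S v) <= 0).
Proof.
move=> x0 ux; have qx := Hpd x x0.
have s0 : 0 < Num.sqrt (qform S x) by rewrite sqrtr_gt0.
have qs : qform S x = Num.sqrt (qform S x) ^+ 2 by rewrite sqr_sqrtr // ltW.
have t0 : 0 < (b - dotv mu x) / Num.sqrt (qform S x) by exact: divr_gt0.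
have Hl : forall t : R, 0 < t -> is_derive t 1 (@ln R) t^-1.
  by move=> t tp; exact: (@is_derive1_ln R t tp).
have e : forall v, qform (hessian (fun z => ln ((b - dotv mu z) / Num.sqrt (qform S z))) x) v =
    (((b - dotv mu x) / Num.sqrt (qform S x)) ^+ 2 * Num.sqrt (qform S x) ^+ 2)^-1 *
    Pf 0 ((b - dotv mu x) / Num.sqrt (qform S x)) (dotv mu v)
        (bf S x v / Num.sqrt (qform S x)) (qform S v).
  move=> v.
  rewrite (hess_qform b mu S HS Hpd _ _ _ Hl Hln1 x v x0 ux).
  rewrite /Dg /G2 /Pf -[bf S v v]/(qform S v).
  set s := Num.sqrt (qform S x) in s0 qs t0 *.
  field.
  by rewrite !gt_eqF.
have cpos : 0 < (((b - dotv mu x) / Num.sqrt (qform S x)) ^+ 2 * Num.sqrt (qform S x) ^+ 2)^-1.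
  by rewrite invr_gt0; apply: mulr_gt0; exact: exprn_gt0.
split => H v.
  by have := H v; rewrite /qform -/(qform _ v) e pmulr_rle0.
by rewrite /qform -/(qform _ v) e pmulr_rle0 //; exact: H.
Qed.

End P.

Theorem lemma2p3 (R : realType) (N : nat) (r b : R) (mu : 'cV[R]_N)
    (Sigma : 'M[R]_N)
    (Hsym : Sigma^T = Sigma)
    (Hpd : forall x : 'cV[R]_N, x != 0 -> 0 < qform Sigma x) :
  let E := [set x : 'cV[R]_N | x != 0 /\ 0 < b - dotv mu x] in
  let f := fun x : 'cV[R]_N =>
             ((b - dotv mu x) / Num.sqrt (qform Sigma x)) `^ r in
  let theta := fun x : 'cV[R]_N => (b - dotv mu x) ^+ 2 / qform Sigma x in
  (r = 0 -> hess_locally_concave f E) /\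
  (r != 0 ->
     (hess_locally_convex (fun x => Num.sg (- r) * f x) E <->
      (forall x, E x ->
         qform (invmx Sigma) mu <=
           (2 - r) * ((dotv mu x) ^+ 2 / qform Sigma x)
           - 2 * r * Num.sqrt (theta x) * (dotv mu x / Num.sqrt (qform Sigma x))
           - (r + 1) * theta x))) /\
  (hess_locally_concave
     (fun x => ln ((b - dotv mu x) / Num.sqrt (qform Sigma x))) E <->
   (forall x, E x ->
      qform (invmx Sigma) mu <= 2 * ((dotv mu x) ^+ 2 / qform Sigma x) - theta x)).
Proof.
move=> E f theta.
have condE : forall (r' : R) x, x != 0 -> 0 < b - dotv mu x ->
  (2 - r') * ((dotv mu x) ^+ 2 / qform Sigma x)
    - 2 * r' * Num.sqrt (theta x) * (dotv mu x / Num.sqrt (qform Sigma x))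
    - (r' + 1) * theta x
  = (2 - r') * (dotv mu x / Num.sqrt (qform Sigma x)) ^+ 2
    - 2 * r' * ((b - dotv mu x) / Num.sqrt (qform Sigma x))
        * (dotv mu x / Num.sqrt (qform Sigma x))
    - (r' + 1) * ((b - dotv mu x) / Num.sqrt (qform Sigma x)) ^+ 2.
  move=> r' x x0 ux; have qx := Hpd x x0.
  have s0 : 0 < Num.sqrt (qform Sigma x) by rewrite sqrtr_gt0.
  have qs : qform Sigma x = Num.sqrt (qform Sigma x) ^+ 2 by rewrite sqr_sqrtr // ltW.
  have t0 : 0 <= (b - dotv mu x) / Num.sqrt (qform Sigma x) by apply/ltW/divr_gt0.
  rewrite /theta.
  set s := Num.sqrt (qform Sigma x) in s0 qs t0 *.
  rewrite qs -!expr_div_n sqrtr_sqr ger0_norm //.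
split.
  move=> r0 x [x0 ux] v.
  have -> : hessian f x = 0.
    apply/matrixP => i j; rewrite !mxE.
    have -> : f = fun _ => 1 by apply/funext => z; rewrite /f r0 powRr0.
    have -> : 'D_(delta_mx i 0) (fun _ : 'cV[R]_N => (1:R)) = fun _ => 0.
      by apply/funext => z; exact: derive_cst.
    exact: derive_cst.
  by rewrite /qform mulmx0 mul0mx mxE.
split.
  move=> rn0; split.
    move=> H x [x0 ux].
    rewrite condE //.
    apply/(pointwise R N b mu Sigma Hsym Hpd r x x0 ux).
    apply/(pow_key R N b mu Sigma Hsym Hpd r rn0 x x0 ux).
    exact: H.
  move=> H x [x0 ux].
  apply/(pow_key R N b mu Sigma Hsym Hpd r rn0 x x0 ux).
  apply/(pointwise R N b mu Sigma Hsym Hpd r x x0 ux).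
  rewrite -condE //.
  exact: H.
have e0 : forall x, x != 0 -> 0 < b - dotv mu x ->
  2 * ((dotv mu x) ^+ 2 / qform Sigma x) - theta x =
  (2 - 0) * (dotv mu x / Num.sqrt (qform Sigma x)) ^+ 2
    - 2 * 0 * ((b - dotv mu x) / Num.sqrt (qform Sigma x))
        * (dotv mu x / Num.sqrt (qform Sigma x))
    - (0 + 1) * ((b - dotv mu x) / Num.sqrt (qform Sigma x)) ^+ 2.
  by move=> x x0 ux; rewrite -condE //; ring.
split.
  move=> H x [x0 ux].
  rewrite e0 //.
  apply/(pointwise R N b mu Sigma Hsym Hpd 0 x x0 ux).
  apply/(ln_key R N b mu Sigma Hsym Hpd x x0 ux).
  exact: H.
move=> H x [x0 ux].
apply/(ln_key R N b mu Sigma Hsym Hpd x x0 ux).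
apply/(pointwise R N b mu Sigma Hsym Hpd 0 x x0 ux).
rewrite -e0 //.
exact: H.
Qed.
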